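(* If $X$ is a connected, locally $\mathfrak{c}$, sequential Hausdorff space, then $|X|\le\mathfrak{c}$.
   Context: A space $X$ is locally $\mathfrak{c}$ if every point of $X$ has a neighbourhood of cardinality $\le\mathfrak{c}$. *)

(* Defs.v *)
From HB Require Import structures.
From mathcomp Require Import all_boot all_order all_algebra.
From mathcomp Require Import all_classical all_reals all_analysis.
Set Implicit Arguments. Unset Strict Implicit. Unset Printing Implicit Defensive.
Local Open Scope classical_set_scope.

(* The continuum c = 2^aleph_0, represented by the power set of nat. *)
Definition continuum_set : set (set nat) := [set: set nat].

Definition seq_closed (X : topologicalType) (A : set X) : Prop :=
  forall (u : nat -> X) (x : X), (forall n, A (u n)) -> u @ \oo --> x -> A x.

Definition sequential_space (X : topologicalType) : Prop :=
  forall A : set X, seq_closed A -> closed A.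

Definition locally_continuum (X : topologicalType) : Prop :=
  forall x : X, exists N : set X, nbhs x N /\ (N #<= continuum_set)%card.

(* Main.v *)
Require Import Defs.
From HB Require Import structures.
From mathcomp Require Import all_boot all_order all_algebra.
From mathcomp Require Import all_classical all_reals all_analysis.
Local Open Scope classical_set_scope.

Inductive ctree := Leaf | Nb of ctree & set nat | Lim of (nat -> ctree).

Fixpoint enc (t : ctree) (p : seq nat) (c : nat) : Prop :=
  match t with
  | Leaf => p = [::] /\ c = 0
  | Nb t s => match p with
              | [::] => c = 1 \/ (exists k, c = k.+3 /\ s k)
              | 0 :: q => enc t q c
              | _ => False end
  | Lim f => match p with [::] => c = 2 | n :: q => enc (f n) q c end
  end.

Lemma enc_inj t1 t2 : (forall p c, enc t1 p c <-> enc t2 p c) -> t1 = t2.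
Proof.
elim: t1 t2 => [|t IH s|f IH] [|t' s'|f'] H.
- by [].
- by have [/(_ (conj erefl erefl))] := H [::] 0 => /= -[//|[k []]].
- by have [/(_ (conj erefl erefl))] := H [::] 0.
- by have [_ /(_ (conj erefl erefl))] := H [::] 0 => /= -[//|[k []]].
- congr Nb.
    by apply: IH => q c; exact: (H (0 :: q) c).
  apply/funext => k; apply/propext; split => Hk.
    have [/(_ (or_intror (ex_intro _ k (conj erefl Hk))))] := H [::] k.+3.
    by move=> /= -[//|[j [[->]]]].
  have [_ /(_ (or_intror (ex_intro _ k (conj erefl Hk))))] := H [::] k.+3.
  by move=> /= -[//|[j [[->]]]].
- by have [/(_ (or_introl erefl))] := H [::] 1.
- by have [_ /(_ (conj erefl erefl))] := H [::] 0.
- by have [_ /(_ (or_introl erefl))] := H [::] 1.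
- congr Lim; apply/funext => n; apply: IH => q c; exact: (H (n :: q) c).
Qed.

Definition code (t : ctree) : set nat :=
  [set m | exists p c, m = pickle (p, c) /\ enc t p c].

Lemma code_inj : injective code.
Proof.
move=> t1 t2 E; apply: enc_inj => p c; split => H.
  have : code t2 (pickle (p, c)) by rewrite -E; exists p, c.
  by move=> [p' [c' [/(pcan_inj pickleK) [-> ->]]]].
have : code t1 (pickle (p, c)) by rewrite E; exists p, c.
by move=> [p' [c' [/(pcan_inj pickleK) [-> ->]]]].
Qed.

Theorem corollary4p4 (X : topologicalType) :
  connected [set: X] -> locally_continuum X -> sequential_space X ->
  hausdorff_space X -> ([set: X] #<= continuum_set)%card.
Proof.
move=> conX HL seqX hX.
suff [f finj] : exists f : X -> set nat, injective f.
  apply/pcard_leP/injfunPex; exists f => // x y _ _; exact: finj.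
case: (pselect (exists x : X, True)) => [[x0 _]|nX]; last first.
  by exists (fun=> set0) => x; case: nX; exists x.
pose N x := projT1 (cid (HL x)).
have NP x : nbhs x (N x) /\ (N x #<= continuum_set)%card := projT2 (cid (HL x)).
have gex x : exists g : X -> set nat, set_inj (N x) g.
  have /pcard_leP/injfunPex [g _ gi] := (NP x).2; by exists g.
pose g x := projT1 (cid (gex x)).
have gi x : set_inj (N x) (g x) := projT2 (cid (gex x)).
pose h x k := xget x [set z | N x z /\ g x z = k].
pose ev := fix ev t := match t with
  | Leaf => x0
  | Nb t s => h (ev t) s
  | Lim f => xget x0 [set y | (fun n => ev (f n)) @ \oo --> y] end.
pose A := range ev.
have oA : open A.
  rewrite openE => y [t _ <-]; apply: filterS (NP (ev t)).1 => z Nz.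
  exists (Nb t (g (ev t) z)) => //=.
  have [] : [set w | N (ev t) w /\ g (ev t) w = g (ev t) z] (h (ev t) (g (ev t) z)).
    by apply: xgetPex; exists z.
  by move=> Nw gw; apply: (gi (ev t)) => //; rewrite inE.
have cA : closed A.
  apply: seqX => u x Hu Hcv.
  have Hu' n : exists t, ev t = u n by case: (Hu n) => t _ <-; exists t.
  have [tf Htf] := choice Hu'.
  have Htf' : (fun n => ev (tf n)) = u by apply/funext => n; exact: Htf.
  exists (Lim tf) => //=.
  have : [set y | (fun n => ev (tf n)) @ \oo --> y] (xget x0 [set y | (fun n => ev (tf n)) @ \oo --> y]).
    by apply: xgetPex; exists x; rewrite Htf'.
  rewrite Htf' => H; exact: (cvg_unique hX H Hcv).
have AT : A = [set: X].
  apply: conX.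
  - by exists x0, Leaf.
  - by exists A => //; rewrite setTI.
  - by exists A => //; rewrite setTI.
have surj x : exists t, ev t = x.
  have : A x by rewrite AT.
  by case=> t _ <-; exists t.
have [rep Hrep] := choice surj.
exists (fun x => code (rep x)) => x y /code_inj E.
by rewrite -(Hrep x) -(Hrep y) E.
Qed.
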